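(* Let $A=A_s+A_d\epsilon\in\mathbb{D}^{m\times n}$ and let $A_1=(A_sA_s^+)A(A_s^+A_s)$. Then the DMPGI of $A_1$ exists and $$A^P=A_1^P=A_1^D=A_1^G.$$
   Context: A dual real matrix is $A=A_s+A_d\epsilon$ with real matrices $A_s,A_d$, $\epsilon\neq0$, $\epsilon^2=0$; $A^\top=A_s^\top+A_d^\top\epsilon$. $A_s^+$ is the Moore–Penrose inverse of the real matrix $A_s$. The Moore–Penrose dual generalized inverse (MPDGI) is $A^P=A_s^+-A_s^+A_dA_s^+\epsilon$. The DMPGI $B^D$ of a dual real matrix $B$ is a matrix $X$ with $BXB=B$, $XBX=X$, $(BX)^\top=BX$, $(XB)^\top=XB$. Every dual real matrix has an SVD $B=U\Sigma V^\top$ with $U,V$ orthogonal dual real and $\Sigma$ diagonal with entries $\mu_1\ge\dots\ge\mu_r$ positive appreciable (nonzero standard part), $\mu_{r+1}\ge\dots\ge\mu_t$ positive infinitesimal (zero standard part), and zeros; the essential part is $B_e=U\begin{bmatrix}\mathrm{diag}(\mu_1,\dots,\mu_r)&O\\O&O\end{bmatrix}V^\top$, and the GMPI $B^G$ is the unique $X$ with $BXB=B_e$, $XBX=X$, $(BX)^\top=BX$, $(XB)^\top=XB$. *)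

(* Defs.v *)
From HB Require Import structures.
From mathcomp Require Import all_boot all_order all_algebra.
From mathcomp Require Import reals.
From Stdlib Require Import ClassicalEpsilon.
Set Implicit Arguments. Unset Strict Implicit. Unset Printing Implicit Defensive.
Import Order.TTheory GRing.Theory Num.Theory.
Local Open Scope ring_scope.

(* A dual real m x n matrix A = A.1 + A.2 eps. *)
Definition dmat (R : realType) (m n : nat) := ('M[R]_(m, n) * 'M[R]_(m, n))%type.

Section Dual.
Variable R : realType.

Definition is_MP (m n : nat) (A : 'M[R]_(m, n)) (X : 'M[R]_(n, m)) : Prop :=
  [/\ A *m X *m A = A, X *m A *m X = X,
      (A *m X)^T = A *m X & (X *m A)^T = X *m A].

Definition pinv (m n : nat) (A : 'M[R]_(m, n)) : 'M[R]_(n, m) :=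
  epsilon (inhabits 0) (fun X => is_MP A X).

(* dual matrix operations (eps^2 = 0) *)
Definition dmul (m n p : nat) (A : dmat R m n) (B : dmat R n p) : dmat R m p :=
  (A.1 *m B.1, A.1 *m B.2 + A.2 *m B.1).

Definition dtr (m n : nat) (A : dmat R m n) : dmat R n m := (A.1^T, A.2^T).

Definition dident (n : nat) : dmat R n n := (1%:M, 0).

Definition mpdgi (m n : nat) (A : dmat R m n) : dmat R n m :=
  (pinv A.1, - (pinv A.1 *m A.2 *m pinv A.1)).

Definition dA1 (m n : nat) (A : dmat R m n) : dmat R m n :=
  let P := A.1 *m pinv A.1 in let Q := pinv A.1 *m A.1 in
  (P *m A.1 *m Q, P *m A.2 *m Q).

Definition is_DMPGI (m n : nat) (B : dmat R m n) (X : dmat R n m) : Prop :=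
  [/\ dmul (dmul B X) B = B, dmul (dmul X B) X = X,
      dtr (dmul B X) = dmul B X & dtr (dmul X B) = dmul X B].

(* total order on dual numbers a + b eps *)
Definition dle (x y : R * R) : Prop := x.1 < y.1 \/ (x.1 = y.1 /\ x.2 <= y.2).

Definition dorth (n : nat) (U : dmat R n n) : Prop :=
  dmul (dtr U) U = dident n /\ dmul U (dtr U) = dident n.

(* B = U S V^T is an SVD of B with r appreciable singular values and
   t - r positive infinitesimal ones. *)
Definition is_dual_svd (m n : nat) (B : dmat R m n) (U : dmat R m m)
    (S : dmat R m n) (V : dmat R n n) (r t : nat) : Prop :=
  dorth U /\ dorth V /\
  (forall (i : 'I_m) (j : 'I_n), (i : nat) <> j -> S.1 i j = 0 /\ S.2 i j = 0) /\
  (r <= t /\ t <= minn m n)%N /\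
  (forall (i : 'I_m) (j : 'I_n), (i : nat) = j ->
      [/\ ((i < r)%N -> 0 < S.1 i j),
          ((r <= i)%N -> (i < t)%N -> S.1 i j = 0 /\ 0 < S.2 i j)
        & ((t <= i)%N -> S.1 i j = 0 /\ S.2 i j = 0)]) /\
  (forall (i i' : 'I_m) (j j' : 'I_n), (i : nat) = j -> (i' : nat) = j' ->
      (i <= i')%N -> (i' < t)%N -> dle (S.1 i' j', S.2 i' j') (S.1 i j, S.2 i j)) /\
  B = dmul (dmul U S) (dtr V).

Definition dtrunc (m n : nat) (S : dmat R m n) (r : nat) : dmat R m n :=
  (\matrix_(i, j) (if (i < r)%N then S.1 i j else 0),
   \matrix_(i, j) (if (i < r)%N then S.2 i j else 0)).

Definition is_essential_part (m n : nat) (B E : dmat R m n) : Prop :=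
  exists U S V r t, is_dual_svd B U S V r t /\
    E = dmul (dmul U (dtrunc S r)) (dtr V).

Definition is_GMPI_wrt (m n : nat) (B E : dmat R m n) (X : dmat R n m) : Prop :=
  [/\ dmul (dmul B X) B = E, dmul (dmul X B) X = X,
      dtr (dmul B X) = dmul B X & dtr (dmul X B) = dmul X B].

End Dual.

(* Main.v *)
Require Import Defs.
From HB Require Import structures.
From mathcomp Require Import all_boot all_order all_algebra.
From mathcomp Require Import reals.
From Stdlib Require Import ClassicalEpsilon.
Import Order.TTheory GRing.Theory Num.Theory.
Set Implicit Arguments. Unset Strict Implicit.
Local Open Scope ring_scope.

Section MP.
Variable R : realType.

Lemma rv_sq0 (n : nat) (w : 'rV[R]_n) : w *m w^T = 0 -> w = 0.
Proof.
move=> /matrixP /(_ 0 0); rewrite !mxE => H.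
have : \sum_j w 0 j * w 0 j == 0.
  by apply/eqP; rewrite -[RHS]H; apply: eq_bigr => j _; rewrite mxE.
rewrite psumr_eq0; last by move=> j _; rewrite -expr2 sqr_ge0.
move=> /allP Hall; apply/matrixP => i j; rewrite (ord1 i) mxE.
have := Hall j (mem_index_enum _); rewrite /= mulf_eq0 orbb => /eqP ->//.
Qed.

Lemma gram_unit (k n : nat) (G : 'M[R]_(k, n)) : row_free G -> G *m G^T \in unitmx.
Proof.
move=> fG; rewrite -row_free_unit; apply: inj_row_free => v Hv.
have : (v *m G) *m (v *m G)^T = 0.
  by rewrite trmx_mul mulmxA -(mulmxA v) Hv mul0mx.
move/rv_sq0/eqP; rewrite mulmx_free_eq0 // => /eqP //.
Qed.

Lemma MP_fact (m r n : nat) (F : 'M[R]_(m, r)) (G : 'M[R]_(r, n)) :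
  row_free G -> row_free F^T -> exists X, is_MP (F *m G) X.
Proof.
move=> fG fF.
have uN := gram_unit fG.
have uM : F^T *m F \in unitmx by have := gram_unit fF; rewrite trmxK.
set N := G *m G^T; set M := F^T *m F.
exists (G^T *m invmx N *m invmx M *m F^T).
have e1 : F *m G *m (G^T *m invmx N *m invmx M *m F^T) = F *m invmx M *m F^T.
  by rewrite !mulmxA -(mulmxA F G) -/N -(mulmxA F N) mulmxV // mulmx1.
have e2 : (G^T *m invmx N *m invmx M *m F^T) *m (F *m G) = G^T *m invmx N *m G.
  by rewrite !mulmxA -(mulmxA _ F^T F) -/M -(mulmxA _ (invmx M) M) mulVmx // mulmx1.
have sM : M^T = M by rewrite /M trmx_mul trmxK.
have sN : N^T = N by rewrite /N trmx_mul trmxK.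
split.
- rewrite e1 !mulmxA -(mulmxA _ F^T F) -/M -(mulmxA _ _ M) mulVmx // mulmx1 //.
- rewrite e2 !mulmxA -(mulmxA _ G G^T) -/N -(mulmxA _ (invmx N) N) mulVmx // mulmx1 //.
- by rewrite e1 !trmx_mul trmxK trmx_inv sM mulmxA.
- by rewrite e2 !trmx_mul trmxK trmx_inv sN mulmxA.
Qed.

Lemma MP_exists (m n : nat) (S : 'M[R]_(m, n)) : exists X, is_MP S X.
Proof.
rewrite -(mulmx_base S); apply: MP_fact; first exact: row_base_free.
by rewrite /row_free mxrank_tr; exact: col_base_full.
Qed.

Lemma pinvP (m n : nat) (S : 'M[R]_(m, n)) : is_MP S (pinv S).
Proof.
rewrite /pinv; case: (MP_exists S) => X HX.
exact: (epsilon_spec (inhabits 0) (fun X => is_MP S X) (ex_intro _ X HX)).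
Qed.

Lemma dmulA (m n p q : nat) (X : dmat R m n) (Y : dmat R n p) (Z : dmat R p q) :
  dmul X (dmul Y Z) = dmul (dmul X Y) Z.
Proof.
case: X => [X1 X2]; case: Y => [Y1 Y2]; case: Z => [Z1 Z2]; rewrite /dmul /=.
by rewrite !mulmxA mulmxDr mulmxDl !mulmxA addrA.
Qed.

Lemma dtr_mul (m n p : nat) (X : dmat R m n) (Y : dmat R n p) :
  dtr (dmul X Y) = dmul (dtr Y) (dtr X).
Proof.
case: X => [X1 X2]; case: Y => [Y1 Y2]; rewrite /dmul /dtr /=.
by rewrite linearD /= !trmx_mul addrC.
Qed.

Lemma dtrK (m n : nat) (X : dmat R m n) : dtr (dtr X) = X.
Proof. by case: X => [X1 X2]; rewrite /dtr /= !trmxK. Qed.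

Lemma dmpgi_uniq (m n : nat) (B : dmat R m n) X Y :
  is_DMPGI B X -> is_DMPGI B Y -> X = Y.
Proof.
case=> h1 h2 h3 h4 [k1 k2 k3 k4].
have e0 : dmul (dmul X (dtr X)) (dtr B) = X.
  by rewrite -dmulA -dtr_mul h3 dmulA h2.
have tB : dtr B = dmul (dtr B) (dmul B Y).
  by rewrite -k3 -dtr_mul k1.
have eX : X = dmul X (dmul B Y).
  by rewrite -{1}e0 {1}tB !dmulA e0.
have e0' : dmul (dtr B) (dmul (dtr Y) Y) = Y.
  by rewrite dmulA -dtr_mul k4 k2.
have tB' : dtr B = dmul (dmul X B) (dtr B).
  by rewrite -h4 -dtr_mul dmulA h1.
rewrite -e0' {1}tB' -!dmulA e0' -eX //.
Qed.
End MP.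

Section Main.
Variables (R : realType) (m n : nat) (A : dmat R m n).
Let S := A.1.
Let D := A.2.
Let Sp := pinv S.
Let D1 := S *m Sp *m D *m (Sp *m S).

Lemma MPS : is_MP S Sp. Proof. exact: pinvP. Qed.

Lemma SSpS p (X : 'M[R]_(p, m)) : X *m S *m Sp *m S = X *m S.
Proof. by case: MPS => h _ _ _; rewrite -!mulmxA (mulmxA S) h. Qed.
Lemma SpSSp p (X : 'M[R]_(p, n)) : X *m Sp *m S *m Sp = X *m Sp.
Proof. by case: MPS => _ h _ _; rewrite -!mulmxA (mulmxA Sp) h. Qed.
Lemma SSpS0 : S *m Sp *m S = S. Proof. by case: MPS. Qed.
Lemma SpSSp0 : Sp *m S *m Sp = Sp. Proof. by case: MPS. Qed.

Lemma hA1 : dA1 A = (S, D1).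
Proof.
rewrite /dA1 /D1 -/S -/D -/Sp; congr pair.
  by rewrite !mulmxA !SSpS0.
Qed.

Lemma hBX : dmul (S, D1) (Sp, - (Sp *m D *m Sp)) = (S *m Sp, 0).
Proof.
rewrite /dmul /= /D1; congr pair.
  by rewrite mulmxN !mulmxA SpSSp addNr.
Qed.

Lemma hXB : dmul (Sp, - (Sp *m D *m Sp)) (S, D1) = (Sp *m S, 0).
Proof.
rewrite /dmul /= /D1; congr pair.
rewrite mulNmx !mulmxA SpSSp0. by rewrite addrN.
Qed.


Lemma DM : is_DMPGI (S, D1) (Sp, - (Sp *m D *m Sp)).
Proof.
case: MPS => h1 h2 h3 h4.
split; rewrite ?dmulA ?hBX ?hXB /dmul /dtr /= ?trmx0 ?h3 ?h4 //; congr pair; rewrite ?mul0mx ?addr0 //.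
- by rewrite /D1 !mulmxA SSpS0.
- by rewrite mulmxN !mulmxA SpSSp0.
Qed.

Lemma MPeq : mpdgi (S, D1) = (Sp, - (Sp *m D *m Sp)).
Proof.
rewrite /mpdgi /= -/Sp /D1; congr pair.
by rewrite !mulmxA SpSSp0 SpSSp.
Qed.


Lemma row0_mul (p q k : nat) (M : 'M[R]_(p, q)) (N : 'M[R]_(q, k)) i j :
  (forall l, M i l = 0) -> (M *m N) i j = 0.
Proof. by move=> h; rewrite mxE big1 // => l _; rewrite h mul0r. Qed.

Lemma col0_mul (p q k : nat) (M : 'M[R]_(p, q)) (N : 'M[R]_(q, k)) i j :
  (forall l, N l j = 0) -> (M *m N) i j = 0.
Proof. by move=> h; rewrite mxE big1 // => l _; rewrite h mulr0. Qed.

Lemma ess E : is_essential_part (S, D1) E -> E = (S, D1).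
Proof.
case=> U [Sg [V [r [t [[oU [oV [offd [[hrt htm] [diag [_ hB]]]]]] ->]]]]].
case: oU => /(congr1 fst) /= hU _.
case: oV => /(congr1 fst) /= hV _.
have hB1 : S = U.1 *m Sg.1 *m V.1^T by move: hB => /(congr1 fst).
have hB2 : D1 = U.1 *m Sg.1 *m V.2^T + (U.1 *m Sg.2 + U.2 *m Sg.1) *m V.1^T.
  by move: hB => /(congr1 snd).
have htr : (t <= r)%N.
  rewrite leqNgt; apply/negP => hlt.
  have hm : (r < m)%N by apply: leq_trans hlt (leq_trans htm (geq_minl m n)).
  have hn : (r < n)%N by apply: leq_trans hlt (leq_trans htm (geq_minr m n)).
  pose i : 'I_m := Ordinal hm; pose j : 'I_n := Ordinal hn.
  have [_ /(_ (leqnn r) hlt) [z1 p2] _] := diag i j erefl.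
  have rowz : forall l, Sg.1 i l = 0.
    move=> l; case: (eqVneq (nat_of_ord l) r) => hl.
      by have -> : l = j by apply: val_inj.
    have [] // := offd i l.
    by move=> /= hh; rewrite -hh eqxx in hl.
  have colz : forall l, Sg.1 l j = 0.
    move=> l; case: (eqVneq (nat_of_ord l) r) => hl.
      by have -> : l = i by apply: val_inj.
    have [] // := offd l j.
    by move=> /= hh; rewrite hh eqxx in hl.
  have e1 : (U.1^T *m D1 *m V.1) i j = 0.
    rewrite /D1 hB1 !mulmxA hU mul1mx -!mulmxA.
    exact: row0_mul.
  have e2 : (U.1^T *m D1 *m V.1) i j = Sg.2 i j.
    rewrite hB2 (mulmxDr (U.1)^T) mulmxDl !mulmxA hU !mul1mx.
    rewrite -!mulmxA hV mulmx1 mulmxDr !mulmxA hU mul1mx -(mulmxA Sg.1).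
    rewrite mxE (row0_mul _ _ rowz) add0r mxE (col0_mul _ _ colz) addr0 //.
  by move: p2; rewrite -e2 e1 ltxx.
have -> : dtrunc Sg r = Sg.
  case: Sg offd diag hB hB1 hB2 => S1 S2 offd diag _ _ _.
  rewrite /dtrunc /=; congr pair; apply/matrixP => i j; rewrite mxE;
    case: ifP => // /negbT; rewrite -leqNgt => hi;
    (case: (eqVneq (val i) (val j)) => hij;
     [ by case: (diag i j hij) => _ _ /(_ (leq_trans htr hi)) [] 
     | by case: (offd i j (elimN eqP hij))]).
by rewrite -hB.
Qed.

End Main.

Theorem theorem5p3 (R : realType) (m n : nat) (A : dmat R m n) :
  [/\ (* the DMPGI of A_1 exists, is unique, and equals A^P *)
      is_DMPGI (dA1 A) (mpdgi A),
      (forall X : dmat R n m, is_DMPGI (dA1 A) X -> X = mpdgi A),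
      (* A_1^P = A^P *)
      mpdgi (dA1 A) = mpdgi A,
      (* A^P is a GMPI of A_1 *)
      (forall E : dmat R m n, is_essential_part (dA1 A) E ->
          is_GMPI_wrt (dA1 A) E (mpdgi A))
    & (* and the GMPI of A_1 is unique, hence A_1^G = A^P *)
      (forall (E : dmat R m n) (X : dmat R n m), is_essential_part (dA1 A) E ->
          is_GMPI_wrt (dA1 A) E X -> X = mpdgi A)].
Proof.
have hP : mpdgi A = (pinv A.1, - (pinv A.1 *m A.2 *m pinv A.1)) by [].
have hD := DM A; rewrite -hP -hA1 in hD.
split => //.
- by move=> X hX; apply: (dmpgi_uniq hX hD).
- by rewrite hA1 MPeq.
- move=> E; rewrite hA1 => /ess ->; rewrite -hA1; exact: hD.
- move=> E X; rewrite hA1 => /ess ->; rewrite -hA1 => hX.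
  exact: (dmpgi_uniq hX hD).
Qed.
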